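(* Let $\tau$ be a distributive triangle function on $\Delta^+$, $\Sigma$ a ring of subsets of $\Omega\ne\emptyset$, $\gamma$ a $\tau$-decomposable measure on $\Sigma$ and $E\in\Sigma$. Let $f,g:\Omega\to[0,+\infty]$ be measurable functions that are $\gamma$-integrable on $E$. Then: (i) if $f\le g$, then $\int_E f\,d\gamma\ge\int_E g\,d\gamma$; (ii) for every $c\in[0,\infty)$, $\int_E c\cdot f\,d\gamma=c\odot\int_E f\,d\gamma$. (In particular these hold for simple functions.)
   Context: $\Delta^+$: functions $F:[-\infty,+\infty]\to[0,1]$ non-decreasing, left-continuous on $\mathbb{R}$, $F(x)=0$ for $x\le0$, $F(+\infty)=1$, ordered pointwise; $\varepsilon_0(x)=1$ if $x>0$, else $0$. Triangle function: symmetric, associative $\tau:\Delta^+\times\Delta^+\to\Delta^+$, non-decreasing in each variable, identity $\varepsilon_0$; $G\oplus H=\tau(G,H)$, $\bigoplus_{k=1}^nG_k=\tau(G_1,\bigoplus_{k=2}^nG_k)$. $c\odot G=\varepsilon_0$ if $c=0$, $(c\odot G)(x)=G(x/c)$ if $c>0$; $\tau$ distributive if $c\odot(G\oplus H)=(c\odot G)\oplus(c\odot H)$ for all $c\ge0$. $\tau$-decomposable measure: $\gamma:\Sigma\to\Delta^+$, $\gamma_\emptyset=\varepsilon_0$, $\gamma_{A\cup B}=\tau(\gamma_A,\gamma_B)$ for disjoint $A,B\in\Sigma$. Simple function $\sum_{i=1}^nx_i\chi_{E_i}$ ($x_i\in[0,\infty)$, $E_i\in\Sigma$ pairwise disjoint),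 $\int_Ef\,d\gamma=\bigoplus_ix_i\odot\gamma_{E\cap E_i}$. Measurable: pointwise limit of simple functions. $\mathcal S_{f,E}$: simple $\mathfrak f$ with $\mathfrak f(t)\le f(t)$ for $t\in E$. $f$ is $\gamma$-integrable on $E$ if some $H\in\Delta^+$ satisfies $\int_E\mathfrak f\,d\gamma\ge H$ for all $\mathfrak f\in\mathcal S_{f,E}$; then $\int_Ef\,d\gamma=\inf\{\int_E\mathfrak f\,d\gamma:\mathfrak f\in\mathcal S_{f,E}\}$, infimum in $(\Delta^+,\le)$ (left-continuous regularization of the pointwise infimum). *)

(* Defs.v *)
From HB Require Import structures.
From mathcomp Require Import all_boot all_order all_algebra.
From mathcomp Require Import all_classical all_reals all_analysis.
Set Implicit Arguments. Unset Strict Implicit. Unset Printing Implicit Defensive.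
Import Order.TTheory GRing.Theory Num.Theory.
Import numFieldNormedType.Exports.
Local Open Scope classical_set_scope.
Local Open Scope ring_scope.

Section Defs.
Variable R : realType.

(* Distribution functions are modelled as raw functions [-oo,+oo] -> R;
   membership in Delta^+ is the predicate [inDelta]. *)
Definition dfun := \bar R -> R.

Definition inDelta (F : dfun) : Prop :=
  [/\ (forall x, 0 <= F x <= 1),
      (forall x y, (x <= y)%E -> F x <= F y),
      (forall x : R, (fun y : R => F y%:E) @ x^'- --> F x%:E),
      (forall x, (x <= 0)%E -> F x = 0) &
      F +oo%E = 1].

Definition dle (F G : dfun) : Prop := forall x, F x <= G x.

Definition eps0 : dfun := fun x => if (0 < x)%E then 1 else 0.

Definition triangle_function (tau : dfun -> dfun -> dfun) : Prop :=
  [/\ (forall F G, inDelta F -> inDelta G -> inDelta (tau F G)),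
      (forall F G, inDelta F -> inDelta G -> tau F G = tau G F),
      (forall F G H, inDelta F -> inDelta G -> inDelta H ->
          tau F (tau G H) = tau (tau F G) H),
      (forall F G H, inDelta F -> inDelta G -> inDelta H ->
          dle F G -> dle (tau F H) (tau G H)) &
      (forall F, inDelta F -> tau F eps0 = F)].

Definition odot (c : R) (G : dfun) : dfun :=
  fun x => if c == 0 then eps0 x else G (x * (c^-1)%:E)%E.

Definition distributive_tf (tau : dfun -> dfun -> dfun) : Prop :=
  forall (c : R) F G, 0 <= c -> inDelta F -> inDelta G ->
    odot c (tau F G) = tau (odot c F) (odot c G).

Variable Omega : Type.

Definition decomposable_measure (tau : dfun -> dfun -> dfun)
    (Sigma : set (set Omega)) (gamma : set Omega -> dfun) : Prop :=
  [/\ (forall A, Sigma A -> inDelta (gamma A)),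
      gamma set0 = eps0 &
      (forall A B, Sigma A -> Sigma B -> A `&` B = set0 ->
         gamma (A `|` B) = tau (gamma A) (gamma B))].

(* A simple function is given by a representation [:: (x_1,E_1); ...; (x_n,E_n)]
   with x_i in [0,oo), E_i in Sigma pairwise disjoint. *)
Definition simple_rep (Sigma : set (set Omega)) (s : seq (R * set Omega)) : Prop :=
  (forall p, p \in s -> 0 <= p.1 /\ Sigma p.2) /\
  (forall i j, (i < size s)%N -> (j < size s)%N -> i <> j ->
     (nth (0, set0) s i).2 `&` (nth (0, set0) s j).2 = set0).

Definition simple_val (s : seq (R * set Omega)) (t : Omega) : \bar R :=
  (\sum_(p <- s) p.1 * (\1_(p.2) t : R))%:E.

Definition bigoplus (tau : dfun -> dfun -> dfun) (Gs : seq dfun) : dfun :=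
  foldr tau eps0 Gs.

Definition simple_integral (tau : dfun -> dfun -> dfun) (gamma : set Omega -> dfun)
    (E : set Omega) (s : seq (R * set Omega)) : dfun :=
  bigoplus tau [seq odot p.1 (gamma (E `&` p.2)) | p <- s].

Definition gamma_measurable (Sigma : set (set Omega)) (f : Omega -> \bar R) : Prop :=
  exists s : nat -> seq (R * set Omega),
    (forall n, simple_rep Sigma (s n)) /\
    (forall t, (fun n => simple_val (s n) t) @ \oo --> f t).

Definition simple_below_integrals (tau : dfun -> dfun -> dfun) (Sigma : set (set Omega))
    (gamma : set Omega -> dfun) (f : Omega -> \bar R) (E : set Omega) : set dfun :=
  [set simple_integral tau gamma E s | s in
     [set s | simple_rep Sigma s /\ (forall t, E t -> (simple_val s t <= f t)%E)]].

Definition gamma_integrable (tau : dfun -> dfun -> dfun) (Sigma : set (set Omega))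
    (gamma : set Omega -> dfun) (f : Omega -> \bar R) (E : set Omega) : Prop :=
  exists H, inDelta H /\
    forall G, simple_below_integrals tau Sigma gamma f E G -> dle H G.

(* infimum in (Delta^+, <=): left-continuous regularization of the pointwise
   infimum on R; value 1 at +oo and 0 at -oo. *)
Definition dinf (S : set dfun) : dfun :=
  fun x => match x with
  | EFin r => sup [set inf [set G y%:E | G in S] | y in [set y : R | y < r]]
  | +oo%E => 1
  | -oo%E => 0
  end.

Definition gamma_integral (tau : dfun -> dfun -> dfun) (Sigma : set (set Omega))
    (gamma : set Omega -> dfun) (f : Omega -> \bar R) (E : set Omega) : dfun :=
  dinf (simple_below_integrals tau Sigma gamma f E).

End Defs.

(* Main.v *)
Require Import Defs.
From HB Require Import structures.
From mathcomp Require Import all_boot all_order all_algebra.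
From mathcomp Require Import all_classical all_reals all_analysis.
Import Order.TTheory GRing.Theory Num.Theory.
Import numFieldNormedType.Exports.
Local Open Scope classical_set_scope.
Local Open Scope ring_scope.

Section Aux.
Variable R : realType.

Lemma eps0_inDelta : inDelta (@eps0 R).
Proof.
rewrite /eps0; split.
- by move=> x; case: ifP => _; apply/andP; split; rewrite ?ler01 ?lexx.
- move=> x y xy; case: ifP => h1; case: ifP => h2 //=.
  by rewrite (lt_le_trans h1 xy) in h2.
- move=> x /=; case: (ltrP 0 x) => hx.
  + rewrite lte_fin hx; apply: cvg_near_cst; near=> y.
    have : 0 < y by near: y; exact: nbhs_left_gt.
    by rewrite lte_fin => ->.
  + rewrite lte_fin ltNge hx /=; apply: cvg_near_cst; near=> y.
    have : y < x by near: y; exact: nbhs_left_lt.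
    move=> yx; rewrite lte_fin ifF //; apply/negbTE; rewrite -leNgt.
    exact: (le_trans (ltW yx) hx).
- by move=> x hx; rewrite ifF //; apply/negbTE; rewrite -leNgt.
- by rewrite ltry.
Unshelve. all: by end_near.
Qed.

Lemma odot_inDelta (c : R) (G : dfun R) : 0 <= c -> inDelta G -> inDelta (odot c G).
Proof.
move=> c0 [G1 G2 G3 G4 G5].
have [ce|cn0] := eqVneq c 0.
  have -> : odot c G = @eps0 R by apply/funext=> x; rewrite /odot ce eqxx.
  exact: eps0_inDelta.
have -> : odot c G = fun x => G (x * c^-1%:E)%E.
  by apply/funext => x; rewrite /odot (negbTE cn0).
have cp : 0 < c by rewrite lt_def cn0 c0.
have cip : 0 < c^-1 by rewrite invr_gt0.
split.
- by move=> x.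
- move=> x y xy; apply: G2; rewrite lee_pmul2r //.
- move=> x /=.
  have h : (fun y => y * c^-1) @ x^'- --> (x * c^-1)^'-.
    move=> A /= hA.
    have hc : (fun y : R => y * c^-1) @ x --> x * c^-1.
      exact: (@cvgMr_tmp _ _ _ _ id x c^-1 cvg_id).
    have := hc _ hA.
    move=> H.
    have H' : \forall y \near x, y < x -> A (y / c).
      near=> y => yx.
      have : (fun t => t < x / c -> A t) (y / c) by near: y; exact: H.
      by apply; rewrite ltr_pM2r.
    exact: H'.
  have := cvg_comp _ _ h (G3 (x * c^-1)).
  by apply: cvg_trans; apply: near_eq_cvg; near=> y.
- move=> x hx; apply: G4.
  case: x hx => [r| |] //= hr.
  + by rewrite -EFinM lee_fin pmulr_lle0 // -lee_fin.
  + by rewrite gt0_mulNye ?lte_fin.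
- by rewrite gt0_mulye ?lte_fin.
Unshelve. all: by end_near.
Qed.


Lemma odot_eps0 (c : R) : 0 <= c -> odot c (@eps0 R) = @eps0 R.
Proof.
move=> c0; apply/funext => x; rewrite /odot.
have [//|cn0] := eqVneq c 0.
have cip : 0 < c^-1 by rewrite invr_gt0 lt_def cn0 c0.
rewrite /eps0; case: x => [r| |] /=.
- by rewrite -EFinM !lte_fin pmulr_lgt0.
- by rewrite gt0_mulye ?lte_fin.
- by rewrite gt0_mulNye ?lte_fin.
Qed.

Lemma odotM (c x : R) (G : dfun R) : 0 < c -> 0 <= x ->
  odot (c * x) G = odot c (odot x G).
Proof.
move=> cp x0; have [->|xn0] := eqVneq x 0.
  have e : odot 0 G = @eps0 R by apply/funext=> y; rewrite /odot eqxx.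
  by rewrite mulr0 e odot_eps0 // ltW.
apply/funext => y; rewrite /odot mulf_eq0 (negbTE xn0) gt_eqF //=.
by rewrite invfM -muleA EFinM.
Qed.


Lemma dinf_scale c (S : set (dfun R)) : 0 < c -> dinf (odot c @` S) = odot c (dinf S).
Proof.
move=> cp; apply/funext => x; rewrite {2}/odot gt_eqF //.
have cip : 0 < c^-1 by rewrite invr_gt0.
case: x => [r| |] /=.
- congr sup.
  have hI : forall y, [set G y%:E | G in odot c @` S] = [set G (y / c)%:E | G in S].
    move=> y; apply/seteqP; split => v.
    + case=> G [G0 hG0 <-] <-; exists G0 => //.
      by rewrite /odot gt_eqF //= -EFinM.
    + case=> G0 hG0 <-; exists (odot c G0); first by exists G0.
      by rewrite /odot gt_eqF // -EFinM.
  apply/seteqP; split => v.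
  + case=> y hy <-; exists (y / c); last by rewrite hI.
    by rewrite /= ltr_pM2r.
  + case=> z hz <-; exists (z * c); last by rewrite hI mulfK ?gt_eqF.
    by move: hz; rewrite /= ltr_pdivlMr.
- by rewrite gt0_mulye ?lte_fin.
- by rewrite gt0_mulNye ?lte_fin.
Qed.

Lemma dinf_le (S T : set (dfun R)) (H : dfun R) : S `<=` T ->
  (forall G, T G -> dle H G) -> S (@eps0 R) -> dle (dinf T) (dinf S).
Proof.
move=> ST HT S0 [r| |] /=; [|by rewrite lexx|by rewrite lexx].
have lbT : forall y, has_lbound [set G y%:E | G in T].
  by move=> y; exists (H y%:E) => v [G hG <-]; exact: HT.
have lbS : forall y, has_lbound [set G y%:E | G in S].
  by move=> y; exists (H y%:E) => v [G hG <-]; apply: HT; exact: ST.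
have neS : forall y, [set G y%:E | G in S] !=set0.
  by move=> y; exists (@eps0 R y%:E); exists (@eps0 R).
apply: sup_le.
- move=> v [y hy <-]; exists (inf [set G y%:E | G in S]); split; first by exists y.
  apply: lb_le_inf => // w [G hG <-]; apply: ge_inf => //; exists G => //; exact: ST.
- by exists (inf [set G (r - 1)%:E | G in T]), (r - 1) => //=; rewrite ltrBlDr ltrDl.
- split; first by exists (inf [set G (r - 1)%:E | G in S]), (r - 1) => //=; rewrite ltrBlDr ltrDl.
  exists 1 => v [y hy <-]; apply: le_trans (_ : @eps0 R y%:E <= 1).
    by apply: ge_inf => //; exists (@eps0 R).
  by rewrite /eps0; case: ifP.
Qed.

Lemma dinf_eps0 : dinf [set @eps0 R] = @eps0 R.
Proof.
apply/funext => -[r| |] /=; last 2 first.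
- by rewrite /eps0 ltry.
- by rewrite /eps0 /=.
have -> : [set inf [set G y%:E | G in [set @eps0 R]] | y in [set y | y < r]]
    = [set @eps0 R y%:E | y in [set y | y < r]].
  by apply/seteqP; split => v [y hy <-]; exists y => //; rewrite image_set1 inf1.
rewrite /eps0 lte_fin; case: (ltrP 0 r) => hr.
- apply/le_anti/andP; split.
  + apply: ge_sup; first by exists (@eps0 R (r - 1)%:E), (r - 1) => //=; rewrite ltrBlDr ltrDl.
    by move=> v [y hy <-]; rewrite /eps0; case: ifP.
  + apply: (@le_trans _ _ (@eps0 R (r / 2)%:E)).
      by rewrite /eps0 lte_fin divr_gt0.
    apply: ub_le_sup; last by exists (r / 2) => //=; rewrite ltr_pdivrMr // ltr_pMr // ltr1n.
    by exists 1 => v [y hy <-]; rewrite /eps0; case: ifP.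
- have -> : [set @eps0 R y%:E | y in [set y | y < r]] = [set 0].
    apply/seteqP; split => v.
    + case=> y /= hy <-; rewrite /eps0 lte_fin ifF //; apply/negbTE.
      by rewrite -leNgt (le_trans (ltW hy) hr).
    + move=> ->; exists (r - 1); first by rewrite /= ltrBlDr ltrDl.
      rewrite /eps0 lte_fin ifF //; apply/negbTE; rewrite -leNgt.
      by rewrite (le_trans _ hr) // lerBlDr lerDl.
  by rewrite sup1.
Qed.

End Aux.

Section Aux2.
Variables (R : realType) (Omega : Type).
Variables (tau : dfun R -> dfun R -> dfun R) (Sigma : set (set Omega))
  (gamma : set Omega -> dfun R) (E : set Omega).
Hypotheses (htau : triangle_function tau) (hdist : distributive_tf tau)
  (hring : setring Sigma) (hgam : decomposable_measure tau Sigma gamma) (hE : Sigma E).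

Definition scl (k : R) (s : seq (R * set Omega)) := [seq (k * p.1, p.2) | p <- s].

Lemma SigmaI A B : Sigma A -> Sigma B -> Sigma (A `&` B).
Proof.
move=> hA hB; case: hring => _ _ hD; rewrite -setDD; apply: (hD) => //; exact: (hD).
Qed.

Lemma sint_scale c (s : seq (R * set Omega)) : 0 < c -> (forall p, p \in s -> 0 <= p.1 /\ Sigma p.2) ->
  simple_integral tau gamma E (scl c s) = odot c (simple_integral tau gamma E s) /\
  inDelta (simple_integral tau gamma E s).
Proof.
move=> cp; case: htau => Hd _ _ _ _; case: hgam => Hg _ _.
elim: s => [|p s IH] hs.
  by rewrite /simple_integral /bigoplus /= odot_eps0 ?ltW //; split => //; exact: eps0_inDelta.
have [p0 pS] := hs p (mem_head _ _).
have [IH1 IH2] := IH (fun q hq => hs q (mem_behead (s:=p :: s) hq)).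
have hG : inDelta (odot p.1 (gamma (E `&` p.2))).
  by apply: odot_inDelta => //; apply: Hg; exact: SigmaI.
move: IH1 IH2; rewrite /simple_integral /bigoplus /= => IH1 IH2.
split; last exact: Hd.
by rewrite hdist ?ltW // IH1 odotM.
Qed.


Lemma sval_scl k s t : simple_val (scl k s) t = (k%:E * simple_val s t)%E.
Proof.
rewrite /simple_val /scl big_map -EFinM mulr_sumr; congr EFin.
by apply: eq_bigr => p _ /=; rewrite mulrA.
Qed.

Lemma srep_scl k s : 0 <= k -> simple_rep Sigma s -> simple_rep Sigma (scl k s).
Proof.
move=> k0 [h1 h2]; split.
- move=> p /mapP [q qs ->] /=; have [q0 qS] := h1 q qs; split => //.
  exact: mulr_ge0.
- move=> i j; rewrite /scl size_map => hi hj ij.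
  rewrite (nth_map (0, set0)) // (nth_map (0, set0)) //=; exact: h2.
Qed.

Lemma scl_inv c s : c != 0 -> scl c (scl c^-1 s) = s.
Proof.
move=> cn0; rewrite /scl -map_comp -[RHS]map_id; apply: eq_map => -[x A] /=.
by rewrite mulrA mulfV // mul1r.
Qed.

Lemma srep_elem (s : seq (R * set Omega)) : simple_rep Sigma s -> forall p, p \in s -> 0 <= p.1 /\ Sigma p.2.
Proof. by case. Qed.

Lemma below_scale c (f : Omega -> \bar R) : 0 < c ->
  simple_below_integrals tau Sigma gamma (fun t => (c%:E * f t)%E) E
  = odot c @` simple_below_integrals tau Sigma gamma f E.
Proof.
move=> cp; have c0 := ltW cp; have cn0 : c != 0 by rewrite gt_eqF.
have ci0 : 0 <= c^-1 by rewrite invr_ge0.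
apply/seteqP; split => G.
- case=> s [srep sbelow] <-.
  have rep' := srep_scl c^-1 s ci0 srep.
  exists (simple_integral tau gamma E (scl c^-1 s)).
    exists (scl c^-1 s) => //; split => // t Et.
    rewrite sval_scl.
    apply: (@le_trans _ _ (c^-1%:E * (c%:E * f t))%E).
      by apply: lee_wpmul2l; rewrite ?lee_fin //; exact: sbelow.
    by rewrite muleA -EFinM mulVf // mul1e.
  have [h _] := sint_scale c (scl c^-1 s) cp (srep_elem _ rep').
  by rewrite -h scl_inv.
- case=> G0 [s [srep sbelow] <-] <-.
  exists (scl c s).
    split; first exact: (srep_scl c s c0 srep).
    move=> t Et; rewrite sval_scl; apply: lee_wpmul2l; rewrite ?lee_fin //.
    exact: sbelow.
  by have [-> _] := sint_scale c s cp (srep_elem _ srep).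
Qed.

Lemma zero_int (s : seq (R * set Omega)) : (forall p, p \in s -> 0 <= p.1 /\ Sigma p.2) ->
  (forall t, E t -> (simple_val s t <= 0)%E) -> simple_integral tau gamma E s = @eps0 R.
Proof.
move=> hs hv.
have key : forall p, p \in s -> p.1 = 0 \/ E `&` p.2 = set0.
  move=> p ps; have [->|pn0] := eqVneq p.1 0; [by left|right].
  apply/seteqP; split => // t [Et pt]; exfalso.
  have := hv t Et; rewrite /simple_val lee_fin => hle.
  have h0 : forall q, q \in s -> 0 <= q.1 * (\1_(q.2) t : R).
    by move=> q qs; rewrite indicE mulr_ge0 //; have [] := hs q qs.
  have hsum : \sum_(q <- s | q \in s) q.1 * (\1_(q.2) t : R) = 0.
    apply/le_anti; rewrite -big_seq hle /= big_seq; exact: sumr_ge0.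
  move/eqP: hsum; rewrite psumr_eq0 // => /allP /(_ p ps); rewrite ps /=.
  by rewrite indicE mem_set // mulr1 => h; rewrite h in pn0.
case: htau => _ _ _ _ Hid.
elim: s hs key {hv} => [|p s IH] hs key; first by [].
have := IH (fun q hq => hs q (mem_behead (s:=p :: s) hq))
           (fun q hq => key q (mem_behead (s:=p :: s) hq)).
rewrite /simple_integral /bigoplus /= => ->.
have -> : odot p.1 (gamma (E `&` p.2)) = @eps0 R.
  case: (key p (mem_head _ _)) => [->|->].
    by apply/funext => x; rewrite /odot eqxx.
  case: hgam => _ -> _; apply: odot_eps0; by have [] := hs p (mem_head _ _).
exact: Hid (eps0_inDelta R).
Qed.

End Aux2.

Theorem theorem4p7 (R : realType) (Omega : Type) (omega0 : Omega)
    (tau : dfun R -> dfun R -> dfun R)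
    (Sigma : set (set Omega)) (gamma : set Omega -> dfun R) (E : set Omega)
    (f g : Omega -> \bar R) :
  triangle_function tau -> distributive_tf tau ->
  setring Sigma -> decomposable_measure tau Sigma gamma -> Sigma E ->
  (forall t, (0 <= f t)%E) -> (forall t, (0 <= g t)%E) ->
  gamma_measurable Sigma f -> gamma_measurable Sigma g ->
  gamma_integrable tau Sigma gamma f E -> gamma_integrable tau Sigma gamma g E ->
  ((forall t, (f t <= g t)%E) ->
     dle (gamma_integral tau Sigma gamma g E) (gamma_integral tau Sigma gamma f E)) /\
  (forall c : R, 0 <= c ->
     gamma_integral tau Sigma gamma (fun t => (c%:E * f t)%E) E
     = odot c (gamma_integral tau Sigma gamma f E)).
Proof.
move=> htau hdist hring hgam hE f0 g0 _ _ [Hf [_ HfS]] [Hg [_ HgS]].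
have nilrep : simple_rep Sigma ([::] : seq (R * set Omega)).
  by split => // i j.
have nilint : simple_integral tau gamma E [::] = @eps0 R by [].
split.
- move=> fg; apply: (@dinf_le R _ _ Hg).
  + move=> G [s [srep sb] <-]; exists s => //; split => // t Et.
    exact: le_trans (sb t Et) (fg t).
  + exact: HgS.
  + exists [::] => //; split => // t Et.
    by rewrite /simple_val big_nil.
- move=> c c0; have [ce|cn0] := eqVneq c 0.
  + subst c.
    have -> : odot 0 (gamma_integral tau Sigma gamma f E) = @eps0 R.
      by apply/funext => x; rewrite /odot eqxx.
    rewrite /gamma_integral.
    have -> : simple_below_integrals tau Sigma gamma (fun t => (0%:E * f t)%E) E
        = [set @eps0 R].
      apply/seteqP; split => G.
      * case=> s [srep sb] <-; apply: (@zero_int R Omega tau Sigma gamma E) => //.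
          by case: srep.
        by move=> t Et; rewrite -(mul0e (f t)); exact: sb.
      * move=> ->; exists [::] => //; split => // t Et.
        by rewrite /simple_val big_nil mul0e.
    exact: dinf_eps0.
  + have cp : 0 < c by rewrite lt_def cn0 c0.
    by rewrite /gamma_integral below_scale // dinf_scale.
Qed.
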